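(* Let $(X,r)$ be a finite non-degenerate solution and let $a,b\in A=A(X,r)$. Let $\{\alpha,\beta,\gamma\}=\{\lambda,\rho,\sigma\}$. If $\alpha_a=\alpha_b$ and $\beta_a=\beta_b$, then $\gamma_a=\gamma_b$. Furthermore, if $\alpha_a=\beta_a=\mathrm{id}$ then $\gamma_a=\mathrm{id}$.
   Context: A set-theoretic solution $(X,r)$ of the Yang--Baxter equation: $X$ non-empty, $r\colon X\times X\to X\times X$ satisfying $(r\times\mathrm{id})(\mathrm{id}\times r)(r\times\mathrm{id})=(\mathrm{id}\times r)(r\times\mathrm{id})(\mathrm{id}\times r)$; write $r(x,y)=(\lambda_x(y),\rho_y(x))$; non-degenerate means $r$ bijective and all $\lambda_x,\rho_y$ bijective. Put $\sigma_y(x)=\lambda_y\rho_{\lambda_x^{-1}(y)}(x)$. Let $M$ be the monoid with presentation $\langle X\mid x\circ y=\lambda_x(y)\circ\rho_y(x)\ (x,y\in X)\rangle$ and $A$ the monoid $\langle X\mid x+y=y+\sigma_y(x)\ (x,y\in X)\rangle$. The following known structure is used: there is a bijection $M\to A$ fixing $X$; identifying $M$ and $A$ through it, the set $A$ carries two monoid operations $\circ$ and $+$ with common identity, and maps $a\mapsto\lambda_a$ (a monoid morphism $(A,\circ)\to\mathrm{Aut}(A,+)$), $a\mapsto\rho_a$ (a monoid anti-morphism $(A,\circ)\to\mathrm{Sym}(A)$) and $a\mapsto\sigma_a$ (a monoid anti-morphism $(A,+)\to\mathrm{Aut}(A,+)$), extending the given maps on $X$, such that for all $a,b,c\in A$: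 $a\circ b=a+\lambda_a(b)$, $a\circ b=\lambda_a(b)\circ\rho_b(a)$, $a+b=b+\sigma_b(a)$, $\sigma_{\lambda_a(b)}\lambda_a=\lambda_a\sigma_b$, $\lambda_a\lambda_b=\lambda_{\lambda_a(b)}\lambda_{\rho_b(a)}$, and $\sigma_b(a)=\lambda_b\rho_{\lambda_a^{-1}(b)}(a)$. All these maps are bijections of $A$ mapping $X$ onto $X$. *)

(* Defs.v *)
From Stdlib Require Import Relations.
From mathcomp Require Import all_boot.
Set Implicit Arguments. Unset Strict Implicit. Unset Printing Implicit Defensive.

Section YBE.
Variable X : finType.
Variable r : X * X -> X * X.

Definition lam (x : X) : X -> X := fun y => (r (x, y)).1.
Definition rho (y : X) : X -> X := fun x => (r (x, y)).2.

Definition r12 (t : X * X * X) : X * X * X :=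
  let: (x, y, z) := t in let: (u, v) := r (x, y) in (u, v, z).
Definition r23 (t : X * X * X) : X * X * X :=
  let: (x, y, z) := t in let: (v, w) := r (y, z) in (x, v, w).

Definition is_solution : Prop :=
  forall t, r12 (r23 (r12 t)) = r23 (r12 (r23 t)).

Definition nondegenerate : Prop :=
  [/\ bijective r, (forall x, bijective (lam x)) & (forall y, bijective (rho y))].

(* lambda_x^{-1}(y) (correct whenever lambda_x is bijective) *)
Definition lam_inv (x y : X) : X := odflt y [pick z | lam x z == y].

Definition sigma (y x : X) : X := lam y (rho (lam_inv x y) x).

(* The additive monoid A = < X | x + y = y + sigma_y(x) >:
   elements are represented by words (x1 + ... + xn  ~  [:: x1; ...; xn]),
   equality in A is the congruence Aeq generated by the relations. *)
Definition Astep (u v : seq X) : Prop :=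
  exists p q x y, u = p ++ x :: y :: q /\ v = p ++ y :: sigma y x :: q.
Definition Aeq : relation (seq X) := clos_refl_sym_trans _ Astep.

(* Words of the structure monoid M: x1 o ... o xn ~ [:: x1; ...; xn].
   The bijection pi : M -> A fixing X, pi(x o w) = x + lambda_x(pi w). *)
Fixpoint piMA (w : seq X) : seq X :=
  if w is x :: w' then x :: map (lam x) (piMA w') else [::].
Fixpoint piAM_rec (n : nat) (s : seq X) : seq X :=
  if n is n'.+1 then
    (if s is y :: t then y :: piAM_rec n' (map (lam_inv y) t) else [::])
  else [::].
Definition piAM (s : seq X) : seq X := piAM_rec (size s) s.

Definition lamM (w : seq X) : X -> X := foldr (fun x f => lam x \o f) id w.
Fixpoint sigW (a : seq X) : X -> X :=
  if a is y :: t then sigW t \o sigma y else id.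
Fixpoint rho1 (x : X) (w : seq X) : seq X :=
  if w is a1 :: a' then rho (lamM a' x) a1 :: rho1 x a' else [::].
Fixpoint rhoM (b w : seq X) : seq X :=
  if b is x :: b' then rhoM b' (rho1 x w) else w.

(* The extended maps lambda_a, rho_a, sigma_a : A -> A, for a in A
   (arguments and values are A-words). lambda_a and sigma_a are
   automorphisms of (A,+) mapping X onto X, hence act letterwise. *)
Definition lamA (a : seq X) : seq X -> seq X := map (lamM (piAM a)).
Definition sigA (a : seq X) : seq X -> seq X := map (sigW a).
Definition rhoA (b : seq X) : seq X -> seq X :=
  fun c => piMA (rhoM (piAM b) (piAM c)).

End YBE.

Inductive kind := KLam | KRho | KSig.

Definition mapA (X : finType) (r : X * X -> X * X) (k : kind) (a : seq X)
  : seq X -> seq X :=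
  match k with KLam => lamA r a | KRho => rhoA r a | KSig => sigA r a end.

Definition Aeq_map (X : finType) (r : X * X -> X * X) (f g : seq X -> seq X) : Prop :=
  forall c, Aeq r (f c) (g c).

(* Main.v *)
Require Import Defs.
From Stdlib Require Import Relations.
From mathcomp Require Import all_boot.

Set Implicit Arguments. Unset Strict Implicit. Unset Printing Implicit Defensive.

Lemma r12E (X : finType) (r : X * X -> X * X) x y z :
  r12 r (x,y,z) = (lam r x y, rho r y x, z).
Proof. rewrite /r12 /lam /rho. by case: (r (x,y)). Qed.

Lemma r23E (X : finType) (r : X * X -> X * X) x y z :
  r23 r (x,y,z) = (x, lam r y z, rho r z y).
Proof. rewrite /r23 /lam /rho. by case: (r (y,z)). Qed.

Lemma ybe_comps (X : finType) (r : X * X -> X * X) (hsol : is_solution r) x y z :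
  [/\ lam r x (lam r y z) = lam r (lam r x y) (lam r (rho r y x) z),
      rho r (lam r (rho r y x) z) (lam r x y) = lam r (rho r (lam r y z) x) (rho r z y)
    & rho r z (rho r y x) = rho r (rho r z y) (rho r (lam r y z) x)].
Proof.
have H := hsol (x,y,z).
rewrite !r12E !r23E !r12E !r23E in H.
case: H => H1 H2 H3. by split.
Qed.

Lemma lamK (X : finType) (r : X * X -> X * X) (hnd : nondegenerate r) x y :
  lam r x (lam_inv r x y) = y.
Proof.
rewrite /lam_inv; case: pickP => [z /eqP //|H].
case: hnd => _ hl _. case: (hl x) => g _ gK.
by move: (H (g y)); rewrite gK eqxx.
Qed.

Lemma lam_inj (X : finType) (r : X * X -> X * X) (hnd : nondegenerate r) x :
  injective (lam r x).
Proof. case: hnd => _ hl _. exact: bij_inj. Qed.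

Lemma lam_invK (X : finType) (r : X * X -> X * X) (hnd : nondegenerate r) x y :
  lam_inv r x (lam r x y) = y.
Proof. exact: (lam_inj hnd (lamK hnd x (lam r x y))). Qed.

Definition Tm (X : finType) (r : X * X -> X * X) (x : X) := lam_inv r x x.

Lemma lam_rho_fix (X : finType) (r : X * X -> X * X) (hsol : is_solution r)
  (hnd : nondegenerate r) x t :
  lam r x t = x -> forall s, lam r (rho r t x) s = lam r t s.
Proof.
move=> hxt s. case: (ybe_comps hsol x t s) => H1 _ _.
rewrite hxt in H1. exact: (lam_inj hnd (esym H1)).
Qed.

Lemma L1 (X : finType) (r : X * X -> X * X) (hsol : is_solution r)
  (hnd : nondegenerate r) y x :
  lam r y (Tm r (rho r y x)) = sigma r y (Tm r x).
Proof.
rewrite /sigma. congr (lam r y _).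
set t := Tm r x. have hxt : lam r x t = x by rewrite /t /Tm (lamK hnd).
set z := lam_inv r t y.
case: (ybe_comps hsol x t z) => _ H2 _.
rewrite hxt (lam_rho_fix hsol hnd hxt) /z (lamK hnd) in H2.
by rewrite /Tm {2}H2 (lam_invK hnd).
Qed.

Lemma L2 (X : finType) (r : X * X -> X * X) (hsol : is_solution r)
  (hnd : nondegenerate r) y z u :
  sigma r (lam r y z) (lam r y u) = lam r y (sigma r z u).
Proof.
rewrite /sigma.
set v := lam_inv r u z.
have huv : lam r u v = z by rewrite /v (lamK hnd).
case: (ybe_comps hsol y u v) => H1 H2 _.
rewrite huv in H1 H2.
rewrite H1 (lam_invK hnd) H2.
case: (ybe_comps hsol y z (rho r v u)) => H1' _ _.
by rewrite H1' -H1.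
Qed.

Lemma Tsurj (X : finType) (r : X * X -> X * X) (hsol : is_solution r)
  (hnd : nondegenerate r) y : exists x, Tm r x = y.
Proof.
have [_ hl hr] := hnd.
case: (hr y) => g _ gK.
set u := g y. have hu : rho r y u = y by rewrite /u gK.
exists (lam r u y).
have E : forall s, lam r u s = lam r (lam r u y) s.
  move=> s. case: (hl y) => h _ hK.
  case: (ybe_comps hsol u y (h s)) => H1 _ _.
  by rewrite hu hK in H1.
by rewrite /Tm {2}(E y) (lam_invK hnd).
Qed.

Lemma Tbij (X : finType) (r : X * X -> X * X) (hsol : is_solution r)
  (hnd : nondegenerate r) : injective (Tm r).
Proof.
have ex : forall y, exists x, Tm r x == y.
  by move=> y; case: (Tsurj hsol hnd y) => x hx; exists x; rewrite hx.
pose S y := xchoose (ex y).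
have TS : forall y, Tm r (S y) = y by move=> y; exact/eqP/(xchooseP (ex y)).
have Sinj : injective S by move=> a b hab; rewrite -(TS a) -(TS b) hab.
have [g gS Sg] := injF_bij Sinj.
have Tg : forall a, Tm r a = g a by move=> a; rewrite -{1}(Sg a) TS.
move=> a b hab. by rewrite -(Sg a) -(Sg b) -!Tg hab.
Qed.

Fixpoint Pm (X : finType) (r : X * X -> X * X) (w : seq X) : X -> X :=
  if w is y :: w' then fun x => Pm r w' (rho r y x) else id.
Fixpoint lamW (X : finType) (r : X * X -> X * X) (v w : seq X) : seq X :=
  if w is x :: w' then lamM r v x :: lamW r (rho1 r x v) w' else [::].
Definition Sm (X : finType) (r : X * X -> X * X) (w : seq X) := Defs.sigW r (piMA r w).

Lemma lamM_bij (X : finType) (r : X * X -> X * X) (hnd : nondegenerate r) w :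
  bijective (lamM r w).
Proof.
have [_ hl _] := hnd.
elim: w => [|x w IH] /=; first by exists id.
exact: bij_comp.
Qed.

Lemma Pm_bij (X : finType) (r : X * X -> X * X) (hnd : nondegenerate r) w :
  bijective (Pm r w).
Proof.
have [_ _ hr] := hnd.
elim: w => [|x w IH] /=; first by exists id.
exact: (bij_comp IH (hr x)).
Qed.

Lemma sig_map (X : finType) (r : X * X -> X * X) (f : X -> X)
  (hf : forall z u, sigma r (f z) (f u) = f (sigma r z u)) t u :
  Defs.sigW r (map f t) (f u) = f (Defs.sigW r t u).
Proof. elim: t u => [|z t IH] u //=. by rewrite hf IH. Qed.

Lemma lamM_sig (X : finType) (r : X * X -> X * X) (hsol : is_solution r)
  (hnd : nondegenerate r) v z u :
  sigma r (lamM r v z) (lamM r v u) = lamM r v (sigma r z u).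
Proof. elim: v => [|y v IH] //=. by rewrite (L2 hsol hnd) IH. Qed.

Lemma star (X : finType) (r : X * X -> X * X) (hsol : is_solution r)
  (hnd : nondegenerate r) w x :
  lamM r w (Tm r (Pm r w x)) = Sm r w (Tm r x).
Proof.
elim: w x => [|y w IH] x //=.
rewrite IH /Sm /= -(L1 hsol hnd).
by rewrite (sig_map (f := lam r y)) // => z u; exact: L2.
Qed.

Lemma F0 (X : finType) (r : X * X -> X * X) (hsol : is_solution r) v x t :
  lam r (lamM r v x) (lamM r (rho1 r x v) t) = lamM r v (lam r x t).
Proof.
elim: v t => [|z v IH] t //=.
case: (ybe_comps hsol z (lamM r v x) (lamM r (rho1 r x v) t)) => H1 _ _.
by rewrite -H1 IH.
Qed.

Lemma F1 (X : finType) (r : X * X -> X * X) (hsol : is_solution r) w v t :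
  lamM r (lamW r v w) (lamM r (rhoM r w v) t) = lamM r v (lamM r w t).
Proof.
elim: w v t => [|x w IH] v t //=.
by rewrite IH (F0 hsol).
Qed.

Lemma F2 (X : finType) (r : X * X -> X * X) (hsol : is_solution r) w v :
  piMA r (lamW r v w) = map (lamM r v) (piMA r w).
Proof.
elim: w v => [|x w IH] v //=.
rewrite IH -!map_comp. congr (_ :: _). apply: eq_map => t /=. exact: (F0 hsol).
Qed.

Lemma rhoM_nil (X : finType) (r : X * X -> X * X) w : rhoM r w [::] = [::].
Proof. by elim: w. Qed.

Lemma lamW_nil (X : finType) (r : X * X -> X * X) w : lamW r [::] w = w.
Proof. by elim: w => //= x w ->. Qed.

Lemma rhoM_cons (X : finType) (r : X * X -> X * X) b z v :
  rhoM r b (z :: v) = Pm r (lamW r v b) z :: rhoM r b v.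
Proof. by elim: b z v => [|x b IH] z v //=; rewrite IH. Qed.

Lemma Pm_eq (X : finType) (r : X * X -> X * X) (hsol : is_solution r)
  (hnd : nondegenerate r) w1 w2 :
  lamM r w1 =1 lamM r w2 -> Sm r w1 =1 Sm r w2 -> Pm r w1 =1 Pm r w2.
Proof.
move=> hL hS x. apply: (Tbij hsol hnd).
apply: (bij_inj (lamM_bij hnd w1)).
by rewrite (star hsol hnd) hS -(star hsol hnd) -hL.
Qed.

Lemma rho_eq (X : finType) (r : X * X -> X * X) (hsol : is_solution r)
  (hnd : nondegenerate r) w1 w2 :
  lamM r w1 =1 lamM r w2 -> Sm r w1 =1 Sm r w2 -> forall v, rhoM r w1 v = rhoM r w2 v.
Proof.
move=> hL hS v.
have E : forall v, rhoM r w1 v = rhoM r w2 v ->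
   lamM r (lamW r v w1) =1 lamM r (lamW r v w2) /\
   Sm r (lamW r v w1) =1 Sm r (lamW r v w2).
  move=> u hu. split.
    move=> t. have [g _ gK] := lamM_bij hnd (rhoM r w1 u).
    rewrite -(gK t) (F1 hsol) hu (F1 hsol). by rewrite hL.
  move=> t. rewrite /Sm !(F2 hsol).
  have [g _ gK] := lamM_bij hnd u.
  rewrite -(gK t) !(sig_map (f := lamM r u)); try by move=> *; exact: (lamM_sig hsol hnd).
  rewrite /Sm in hS. by rewrite hS.
elim: v => [|z v IH]; first by rewrite !rhoM_nil.
rewrite !rhoM_cons IH. case: (E v IH) => h1 h2.
by rewrite (Pm_eq hsol hnd h1 h2).
Qed.

Lemma piMA_piAM_rec (X : finType) (r : X * X -> X * X) (hnd : nondegenerate r) n s :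
  size s <= n -> piMA r (piAM_rec r n s) = s.
Proof.
elim: n s => [|n IH] [|y t] //= hs.
rewrite IH ?size_map // -map_comp.
rewrite -[RHS]map_id. congr (_ :: _). apply: eq_map => z /=. exact: lamK.
Qed.

Lemma piMA_piAM (X : finType) (r : X * X -> X * X) (hnd : nondegenerate r) s :
  piMA r (piAM r s) = s.
Proof. exact: piMA_piAM_rec. Qed.

Lemma Aeq_size (X : finType) (r : X * X -> X * X) s t :
  Aeq r s t -> s = t \/ (1 < size s /\ 1 < size t).
Proof.
elim => {s t}.
- move=> s t [p [q [x [y [E1 E2]]]]]. right. rewrite E1 E2. by rewrite !size_cat /= !addnS.
- by left.
- move=> s t _ [->|[h1 h2]]; [by left | by right].
- move=> s t u _ H1 _ H2.
  case: H1 => [E1|[h1 h2]]; case: H2 => [E2|[h3 h4]].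
  + left. by rewrite E1 E2.
  + right. by rewrite E1.
  + right. by rewrite -E2.
  + by right.
Qed.

Lemma Aeq_single (X : finType) (r : X * X -> X * X) u v :
  Aeq r [:: u] [:: v] -> u = v.
Proof. by case/Aeq_size => [[]|[]]. Qed.

Lemma mapA_nil (X : finType) (r : X * X -> X * X) (hnd : nondegenerate r) k c :
  mapA r k [::] c = c.
Proof.
case: k => /=.
- by rewrite /lamA map_id.
- by rewrite /rhoA /= piMA_piAM.
- by rewrite /sigA map_id.
Qed.

Definition Qk (X : finType) (r : X * X -> X * X) (k : kind) (a b : seq X) : Prop :=
  match k with
  | KLam => lamM r (piAM r a) =1 lamM r (piAM r b)
  | KRho => Pm r (piAM r a) =1 Pm r (piAM r b)
  | KSig => Sm r (piAM r a) =1 Sm r (piAM r b)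
  end.

Lemma extract (X : finType) (r : X * X -> X * X) (hnd : nondegenerate r) k a b :
  Aeq_map r (mapA r k a) (mapA r k b) -> Qk r k a b.
Proof.
case: k => h x; have := h [:: x] => /=.
- by move/Aeq_single.
- rewrite /rhoA /= !rhoM_cons !rhoM_nil !lamW_nil /=. by move/Aeq_single.
- rewrite /sigA /Sm !piMA_piAM //=. by move/Aeq_single.
Qed.

Lemma conclude (X : finType) (r : X * X -> X * X) (hsol : is_solution r)
  (hnd : nondegenerate r) a b :
  Qk r KLam a b -> Qk r KSig a b -> forall k, Aeq_map r (mapA r k a) (mapA r k b).
Proof.
move=> hL hS k c. case: k => /=.
- rewrite /lamA (eq_map hL). exact: rst_refl.
- rewrite /rhoA (rho_eq hsol hnd hL hS). exact: rst_refl.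
- rewrite /sigA. move: hS; rewrite /Qk /Sm !piMA_piAM // => hS.
  rewrite (eq_map hS). exact: rst_refl.
Qed.

Lemma S_of_LR (X : finType) (r : X * X -> X * X) (hsol : is_solution r)
  (hnd : nondegenerate r) w1 w2 :
  lamM r w1 =1 lamM r w2 -> Pm r w1 =1 Pm r w2 -> Sm r w1 =1 Sm r w2.
Proof.
move=> hL hP t. case: (Tsurj hsol hnd t) => x <-.
by rewrite -!(star hsol hnd) hP hL.
Qed.

Lemma L_of_SR (X : finType) (r : X * X -> X * X) (hsol : is_solution r)
  (hnd : nondegenerate r) w1 w2 :
  Sm r w1 =1 Sm r w2 -> Pm r w1 =1 Pm r w2 -> lamM r w1 =1 lamM r w2.
Proof.
move=> hS hP t. case: (Tsurj hsol hnd t) => y <-.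
have [g _ gK] := Pm_bij hnd w1.
rewrite -(gK y) (star hsol hnd) hS hP -(star hsol hnd).
by rewrite -hP.
Qed.

Lemma main1 (X : finType) (r : X * X -> X * X) (hsol : is_solution r)
  (hnd : nondegenerate r) (al be : kind) (hd : al <> be) a b :
  Aeq_map r (mapA r al a) (mapA r al b) ->
  Aeq_map r (mapA r be a) (mapA r be b) ->
  forall k, Aeq_map r (mapA r k a) (mapA r k b).
Proof.
move=> /(extract hnd) h1 /(extract hnd) h2.
apply: (conclude hsol hnd).
- case: al be hd h1 h2 => [] [] //= _ h1 h2 //;
    try exact: (L_of_SR hsol hnd h1 h2); exact: (L_of_SR hsol hnd h2 h1).
- case: al be hd h1 h2 => [] [] //= _ h1 h2 //;
    try exact: (S_of_LR hsol hnd h1 h2); exact: (S_of_LR hsol hnd h2 h1).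
Qed.

Theorem lemma2p1 (X : finType) (r : X * X -> X * X)
  (hX : 0 < #|X|) (hsol : is_solution r) (hnd : nondegenerate r)
  (al be ga : kind) (hdist : [/\ al <> be, be <> ga & al <> ga])
  (a b : seq X) :
  (Aeq_map r (mapA r al a) (mapA r al b) ->
   Aeq_map r (mapA r be a) (mapA r be b) ->
   Aeq_map r (mapA r ga a) (mapA r ga b)) /\
  (Aeq_map r (mapA r al a) id ->
   Aeq_map r (mapA r be a) id ->
   Aeq_map r (mapA r ga a) id).
Proof.
case: hdist => hab _ _. split.
- move=> h1 h2. exact: (main1 hsol hnd hab h1 h2).
- move=> h1 h2 c. rewrite -[X in Aeq r _ X](mapA_nil hnd ga).
  apply: (main1 hsol hnd hab (b := [::])) => d; rewrite mapA_nil //.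
Qed.
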